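(* Consider a computationally efficient prover in the compiled mixed-versus-pure basis test (described in the context) that wins with probability $1-\epsilon$. For $W\in\{X,Z\}$ let $\psi^{\mathsf{Enc}(W)} := \mathbb{E}_{sk\leftarrow\mathsf{Gen}(1^\lambda)}\mathbb{E}_{c\leftarrow\mathsf{Enc}_{sk}(W)}\sum_\alpha \psi^c_\alpha$. Then for every $b\in\{0,1\}^n$ and $W\in\{X,Z\}$, \[ \big\| W(b)\,\psi^{\mathsf{Enc}(W)}\,W(b) - \psi^{\mathsf{Enc}(W)}\big\|_1 \le O(\sqrt{\epsilon}). \]
   Context: Let $(\mathsf{Gen},\mathsf{Enc},\mathsf{Dec})$ be the (classical-message part of a) quantum homomorphic encryption scheme with security parameter $\lambda$. Prover model: the prover has an initial state $\psi$ on a finite-dimensional Hilbert space $\mathcal{H}$; for each classical string $c$ it has operators $\{A^c_\alpha\}_\alpha$ such that $\{(A^c_\alpha)^\dagger A^c_\alpha\}_\alpha$ is a projective measurement, and on first-round message $c$ it answers $\alpha$ leaving the unnormalised post-measurement state $\psi^c_\alpha := A^c_\alpha\psi(A^c_\alpha)^\dagger$. In the second round, on plaintext question $W\in\{X,Z\}$ it applies a projective measurement $\{P^W_u\}_{u\in\{0,1\}^n}$, and on plaintext question $w \in \{\mathds{1},X,Z\}^n$ it applies a projective measurement $\{M^w_u\}_{u\in\{0,1\}^n}$ with $M^w_u = 0$ whenever $w_i = \mathds{1}$ and $u_i=1$ for some $i$. Compiled mixed-versus-pure basis test (with a distribution $D$ on $\{\mathds{1},X,Z\}^n$): the verifier samples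 $sk\leftarrow\mathsf{Gen}(1^\lambda)$ and $W\in\{X,Z\}$ uniformly, sends $c \leftarrow \mathsf{Enc}_{sk}(W)$, receives $\alpha$ and sets $u = \mathsf{Dec}_{sk}(\alpha)\in\{0,1\}^n$; it then samples a uniform bit $\beta$. If $\beta=0$ it sends $W$, receives $v$ (outcome of $\{P^W_v\}$), and accepts iff $u = v$. If $\beta=1$ it samples $w\sim D$, sends $w$, receives $v$ (outcome of $\{M^w_v\}$), and accepts iff $u_i = v_i$ for all $i$ with $w_i = W$. For $W \in\{X,Z\}$ and $b\in\{0,1\}^n$, $W(b) := \sum_u (-1)^{u\cdot b}P^W_u$. $\|\cdot\|_1$ is the trace norm. *)

(* Defs.v *)
From HB Require Import structures.
From mathcomp Require Import all_boot all_order all_algebra.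
Set Implicit Arguments. Unset Strict Implicit. Unset Printing Implicit Defensive.
Import Order.TTheory GRing.Theory Num.Theory.
Local Open Scope ring_scope.

Section Defs.
Variable C : numClosedFieldType.

Definition adjmx {m p} (A : 'M[C]_(m, p)) : 'M[C]_(p, m) := (map_mx Num.conj A)^T.

(* trace norm  ||A||_1 = tr sqrt(A^* A) = sum of square roots of the
   eigenvalues of the (normal, PSD) matrix A^* A, via the spectral theorem *)
Definition trnorm {d} (A : 'M[C]_d) : C :=
  \sum_i sqrtC (spectral_diag (adjmx A *m A) 0 i).

Definition projmeas {d} {I : finType} (P : I -> 'M[C]_d) : Prop :=
  [/\ forall i, adjmx (P i) = P i,
      forall i j, P i *m P j = (if i == j then P i else 0)
    & \sum_i P i = 1%:M].

Definition density {d} (psi : 'M[C]_d) : Prop :=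
  [/\ adjmx psi = psi,
      forall v : 'cV[C]_d, 0 <= (adjmx v *m psi *m v) 0 0
    & \tr psi = 1].

Definition distr {I : finType} (p : I -> C) : Prop :=
  (forall i, 0 <= p i) /\ \sum_i p i = 1.
End Defs.

(* Encoding conventions:
   - the basis letter W in {X,Z} is a bool:  false = X, true = Z;
   - a letter in {1,X,Z} is an option bool:  None = 1 (identity), Some W = W;
   - bit strings in {0,1}^n are {ffun 'I_n -> bool}. *)
Definition bX := false.
Definition bZ := true.

Definition Wobs {C : numClosedFieldType} {d n : nat}
  (P : bool -> {ffun 'I_n -> bool} -> 'M[C]_d) (W : bool)
  (b : {ffun 'I_n -> bool}) : 'M[C]_d :=
  \sum_(u : {ffun 'I_n -> bool}) ((-1) ^+ (\sum_i (u i && b i))%N) *: P W u.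

Definition postst {C : numClosedFieldType} {d : nat} {Ct Al : finType}
  (A : Ct -> Al -> 'M[C]_d) (psi : 'M[C]_d) c a : 'M[C]_d :=
  A c a *m psi *m adjmx (A c a).

Definition psiEnc {C : numClosedFieldType} {d : nat} {SK Ct Al : finType}
  (pGen : SK -> C) (pEnc : SK -> bool -> Ct -> C)
  (A : Ct -> Al -> 'M[C]_d) (psi : 'M[C]_d) (W : bool) : 'M[C]_d :=
  \sum_sk pGen sk *: \sum_c pEnc sk W c *: \sum_a postst A psi c a.

Definition winprob {C : numClosedFieldType} {d n : nat} {SK Ct Al : finType}
  (pGen : SK -> C) (pEnc : SK -> bool -> Ct -> C)
  (Dec : SK -> Al -> {ffun 'I_n -> bool})
  (D : {ffun 'I_n -> option bool} -> C)
  (A : Ct -> Al -> 'M[C]_d) (psi : 'M[C]_d)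
  (P : bool -> {ffun 'I_n -> bool} -> 'M[C]_d)
  (M : {ffun 'I_n -> option bool} -> {ffun 'I_n -> bool} -> 'M[C]_d) : C :=
  \sum_sk pGen sk *
  \sum_(W : bool) 2^-1 *
  \sum_c pEnc sk W c *
  \sum_a
    (2^-1 * \tr (P W (Dec sk a) *m postst A psi c a)
     + 2^-1 * \sum_(w : {ffun 'I_n -> option bool}) D w *
         \sum_(v : {ffun 'I_n -> bool}) (if [forall i, (w i == Some W) ==> (Dec sk a i == v i)]
                 then \tr (M w v *m postst A psi c a) else 0)).

(* Main.v *)
Require Import Defs.
From HB Require Import structures.
From mathcomp Require Import all_boot all_order all_algebra.
From mathcomp Require Import spectral ring.
Import Order.TTheory GRing.Theory Num.Theory.
Local Open Scope ring_scope.


Section Adj.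
Variable C : numClosedFieldType.

Lemma adjM m n p (A : 'M[C]_(m, n)) (B : 'M[C]_(n, p)) :
  adjmx (A *m B) = adjmx B *m adjmx A.
Proof. by rewrite /adjmx map_mxM trmx_mul. Qed.

Lemma adjK m n (A : 'M[C]_(m, n)) : adjmx (adjmx A) = A.
Proof.
by apply/matrixP => i j; rewrite /adjmx !mxE conjCK.
Qed.

Lemma adjD m n (A B : 'M[C]_(m, n)) : adjmx (A + B) = adjmx A + adjmx B.
Proof. by apply/matrixP => i j; rewrite /adjmx !mxE rmorphD. Qed.

Lemma adjN m n (A : 'M[C]_(m, n)) : adjmx (- A) = - adjmx A.
Proof. by apply/matrixP => i j; rewrite /adjmx !mxE rmorphN. Qed.

Lemma adjB m n (A B : 'M[C]_(m, n)) : adjmx (A - B) = adjmx A - adjmx B.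
Proof. by rewrite adjD adjN. Qed.

Lemma adjZ m n a (A : 'M[C]_(m, n)) : adjmx (a *: A) = a^* *: adjmx A.
Proof. by apply/matrixP => i j; rewrite /adjmx !mxE rmorphM. Qed.

Lemma adj1 n : adjmx (1%:M : 'M[C]_n) = 1%:M.
Proof.
by apply/matrixP => i j; rewrite /adjmx !mxE eq_sym; case: eqP; rewrite ?mulr1n ?mulr0n ?rmorph1 ?rmorph0.
Qed.

Lemma adj0 m n : adjmx (0 : 'M[C]_(m,n)) = 0.
Proof. by apply/matrixP => i j; rewrite /adjmx !mxE rmorph0. Qed.

Lemma tr_adj n (A : 'M[C]_n) : \tr (adjmx A) = (\tr A)^*.
Proof.
rewrite /adjmx mxtrace_tr /mxtrace rmorph_sum; apply: eq_bigr => i _.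
by rewrite mxE.
Qed.

End Adj.


Section F.
Variable C : numClosedFieldType.
Variable d : nat.
Variable psi : 'M[C]_d.
Hypothesis psiH : adjmx psi = psi.
Hypothesis psiP : forall v : 'cV[C]_d, 0 <= (adjmx v *m psi *m v) 0 0.

Definition ff (U V : 'M[C]_d) := \tr (U *m psi *m adjmx V).

Lemma ff_ge0 U : 0 <= ff U U.
Proof.
rewrite /ff /mxtrace; apply: sumr_ge0 => i _.
have := psiP (adjmx (row i U)).
rewrite adjK; congr (0 <= _).
rewrite !mxE; apply: eq_bigr => j _; rewrite !mxE; congr (_ * _).
by apply: eq_bigr => k _; rewrite !mxE.
Qed.

Lemma ff_conj U V : (ff U V)^* = ff V U.
Proof. by rewrite /ff -tr_adj !adjM adjK psiH mulmxA. Qed.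

Lemma ffDl U1 U2 V : ff (U1 + U2) V = ff U1 V + ff U2 V.
Proof. by rewrite /ff !mulmxDl mxtraceD. Qed.
Lemma ffDr U V1 V2 : ff U (V1 + V2) = ff U V1 + ff U V2.
Proof. by rewrite /ff adjD !mulmxDr mxtraceD. Qed.
Lemma ffZl a U V : ff (a *: U) V = a * ff U V.
Proof. by rewrite /ff -!scalemxAl mxtraceZ. Qed.
Lemma ffZr a U V : ff U (a *: V) = a^* * ff U V.
Proof. by rewrite /ff adjZ -!scalemxAr mxtraceZ. Qed.
Lemma ffNl U V : ff (- U) V = - ff U V.
Proof. by rewrite -scaleN1r ffZl mulN1r. Qed.
Lemma ffNr U V : ff U (- V) = - ff U V.
Proof. by rewrite -scaleN1r ffZr rmorphN1 mulN1r. Qed.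
Lemma ffBl U1 U2 V : ff (U1 - U2) V = ff U1 V - ff U2 V.
Proof. by rewrite ffDl ffNl. Qed.
Lemma ffBr U V1 V2 : ff U (V1 - V2) = ff U V1 - ff U V2.
Proof. by rewrite ffDr ffNr. Qed.

Lemma ff_real U : (ff U U)^* = ff U U.
Proof. by rewrite ff_conj. Qed.

Lemma cs mu U V : 0 < mu ->
  ff U V + ff V U <= mu * ff U U + mu^-1 * ff V V.
Proof.
move=> mu0.
have muc : mu^* = mu by rewrite conj_Creal // gtr0_real.
have := ff_ge0 (mu *: U - V).
rewrite ffBl !ffBr !ffZl !ffZr muc => H.
have H2 : mu * (ff U V + ff V U) <= mu * mu * ff U U + ff V V.
  rewrite -subr_ge0; apply: le_trans H _; rewrite le_eqVlt; apply/orP; left; apply/eqP.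
  rewrite !mulrA; ring.
have mui : 0 <= mu^-1 by rewrite invr_ge0 ltW.
have := ler_wpM2l mui H2.
rewrite mulrA mulVf ?gt_eqF // mul1r mulrDr !mulrA mulVf ?gt_eqF // mul1r.
by [].
Qed.

Lemma cs_s s mu U V : s^* = s -> s * s = 1 -> 0 < mu ->
  s * ff U V + s * ff V U <= mu * ff U U + mu^-1 * ff V V.
Proof.
move=> sc ss mu0.
have := cs mu U (s *: V) mu0.
by rewrite ffZr ffZl ffZr ffZl sc mulrA ss mul1r.
Qed.

Lemma ff_sq (X E : 'M[C]_d) :
  ff (X *m E) (X *m E) = \tr ((adjmx X *m X) *m (E *m psi *m adjmx E)).
Proof. by rewrite /ff adjM !mulmxA mxtrace_mulC !mulmxA. Qed.

Lemma contr (Z R E : 'M[C]_d) : adjmx Z *m Z + adjmx R *m R = 1%:M ->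
  ff (Z *m E) (Z *m E) <= ff E E.
Proof.
move=> HZ.
have -> : ff E E = ff (Z *m E) (Z *m E) + ff (R *m E) (R *m E).
  by rewrite !ff_sq -mxtraceD -mulmxDl HZ mul1mx /ff.
by rewrite lerDl ff_ge0.
Qed.

Lemma unit_ff (O E : 'M[C]_d) : adjmx O *m O = 1%:M ->
  ff (O *m E) (O *m E) = ff E E.
Proof.
move=> HO; rewrite /ff adjM !mulmxA mxtrace_mulC !mulmxA HO mul1mx.
by rewrite -!mulmxA.
Qed.

Lemma proj_ff (Q E : 'M[C]_d) : adjmx Q = Q -> Q *m Q = Q ->
  ff (Q *m E) (Q *m E) = \tr (Q *m (E *m psi *m adjmx E)).
Proof.
move=> QH QQ; rewrite /ff adjM QH !mulmxA mxtrace_mulC !mulmxA QQ.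
by rewrite -!mulmxA.
Qed.

Lemma bnd2 (mu x y fa fc : C) : 0 < mu -> x <= fa -> y <= fc ->
  mu * x + mu^-1 * y <= mu * fa + mu^-1 * fc.
Proof.
move=> mu0 hx hy; apply: lerD; apply: ler_wpM2l => //; first exact: ltW.
by rewrite invr_ge0 ltW.
Qed.

Lemma perk (O Pi Z R E : 'M[C]_d) (s mu : C) :
  adjmx O = O -> adjmx O *m O = 1%:M ->
  adjmx Pi = Pi -> Pi *m Pi = Pi -> O *m Pi = s *: Pi ->
  s^* = s -> s * s = 1 ->
  adjmx Z *m Z + adjmx R *m R = 1%:M -> 0 < mu ->
  \tr ((O *m (E *m psi *m adjmx E) *m O - (E *m psi *m adjmx E)) *m Z)
  + (\tr ((O *m (E *m psi *m adjmx E) *m O - (E *m psi *m adjmx E)) *m Z))^*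
  <= 4 * mu * \tr (Pi *m (E *m psi *m adjmx E))
     + 4 * (mu^-1 + 1) * (\tr (E *m psi *m adjmx E) - \tr (Pi *m (E *m psi *m adjmx E))).
Proof.
move=> OH OO PiH PiPi OPi sc ss HZ mu0.
set rho := E *m psi *m adjmx E.
set g := \tr ((O *m rho *m O - rho) *m Z).
pose Pc := 1%:M - Pi.
have PcH : adjmx Pc = Pc by rewrite /Pc adjB adj1 PiH.
have PcPc : Pc *m Pc = Pc.
  by rewrite /Pc mulmxBl mul1mx mulmxBr mulmx1 PiPi subrr subr0.
pose a := Pi *m E; pose c := Pc *m E.
have Eac : E = a + c by rewrite /a /c /Pc mulmxBl mul1mx addrC subrK.
have OE : O *m E = s *: a + O *m c.
  by rewrite {1}Eac mulmxDr /a mulmxA OPi scalemxAl.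
have fa : ff a a = \tr (Pi *m rho) by rewrite proj_ff.
have fc : ff c c = \tr rho - \tr (Pi *m rho).
  by rewrite proj_ff // /Pc mulmxBl mul1mx raddfB.
have e1 : \tr (O *m rho *m O *m Z) = ff (Z *m (O *m E)) (O *m E).
  rewrite /ff /rho adjM OH mxtrace_mulC !mulmxA. done.
have e2 : \tr (rho *m Z) = ff (Z *m E) E.
  by rewrite /ff /rho mxtrace_mulC !mulmxA.
have eg : g = s * ff (Z *m a) (O *m c) + s * ff (Z *m (O *m c)) a
              + ff (Z *m (O *m c)) (O *m c)
              - ff (Z *m a) c - ff (Z *m c) a - ff (Z *m c) c.
  have eT : forall X Y : 'M[C]_d, \tr (X - Y) = \tr X - \tr Y.
    by move=> X Y; rewrite raddfB.
  rewrite /g mulmxBl eT e1 e2 OE {1 2}Eac.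
  rewrite !mulmxDr -!scalemxAr !ffDl !ffDr !ffZl !ffZr sc mulrA ss mul1r.
  ring.
have egc : g^* = s * ff (O *m c) (Z *m a) + s * ff a (Z *m (O *m c))
              + ff (O *m c) (Z *m (O *m c))
              - ff c (Z *m a) - ff a (Z *m c) - ff c (Z *m c).
  by rewrite eg !rmorphD !rmorphN !rmorphM /= sc !ff_conj.
have N1c : (-1 : C)^* = -1 by rewrite rmorphN1.
have N11 : (-1 : C) * -1 = 1 by rewrite mulN1r opprK.
have h1c : (1 : C)^* = 1 by rewrite rmorph1.
have h11 : (1 : C) * 1 = 1 by rewrite mulr1.
have cZ : forall V, ff (Z *m V) (Z *m V) <= ff V V by move=> V; exact: (contr _ _ V HZ).
have eqle : forall x y : C, x = y -> x <= y by move=> x y ->.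
have cO : ff (O *m c) (O *m c) = ff c c by exact: unit_ff.
have h1 := le_trans (cs_s _ _ (Z *m a) (O *m c) sc ss mu0)
   (bnd2 _ _ _ _ _ mu0 (cZ a) (eqle _ _ cO)).
have h2 := le_trans (cs_s _ _ a (Z *m (O *m c)) sc ss mu0)
   (bnd2 _ _ _ _ _ mu0 (lexx _) (le_trans (cZ _) (eqle _ _ cO))).
have h3 := le_trans (cs_s _ _ (Z *m (O *m c)) (O *m c) h1c h11 ltr01)
   (bnd2 _ _ _ _ _ ltr01 (le_trans (cZ _) (eqle _ _ cO)) (eqle _ _ cO)).
have h4 := le_trans (cs_s _ _ (Z *m a) c N1c N11 mu0)
   (bnd2 _ _ _ _ _ mu0 (cZ a) (lexx _)).
have h5 := le_trans (cs_s _ _ a (Z *m c) N1c N11 mu0)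
   (bnd2 _ _ _ _ _ mu0 (lexx _) (cZ c)).
have h6 := le_trans (cs_s _ _ (Z *m c) c N1c N11 ltr01)
   (bnd2 _ _ _ _ _ ltr01 (cZ c) (lexx _)).
have H := lerD (lerD (lerD (lerD (lerD h1 h2) h3) h4) h5) h6.
rewrite -fc -fa.
have -> : g + g^* = 
  (s * ff (Z *m a) (O *m c) + s * ff (O *m c) (Z *m a)) +
  (s * ff a (Z *m (O *m c)) + s * ff (Z *m (O *m c)) a) +
  (1 * ff (Z *m (O *m c)) (O *m c) + 1 * ff (O *m c) (Z *m (O *m c))) +
  (-1 * ff (Z *m a) c + -1 * ff c (Z *m a)) +
  (-1 * ff a (Z *m c) + -1 * ff (Z *m c) a) +
  (-1 * ff (Z *m c) c + -1 * ff c (Z *m c)).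
  rewrite egc eg; ring.
apply: le_trans H _; rewrite le_eqVlt; apply/orP; left; apply/eqP.
rewrite invr1; ring.
Qed.

End F.


Section TR.
Variable C : numClosedFieldType.

Lemma adj_ts m n (A : 'M[C]_(m,n)) : adjmx A = (A ^t*)%sesqui.
Proof. by rewrite /adjmx map_trmx. Qed.

Lemma adj_diag n (v : 'rV[C]_n) : adjmx (diag_mx v) = diag_mx (map_mx Num.conj v).
Proof. by rewrite /adjmx map_diag_mx tr_diag_mx. Qed.

Lemma scal_aux (n s : C) : s = n ^+ 2 -> n^-1 * (n^-1 * s * n^-1) = n^-1.
Proof.
move=> ->; have [->|nz] := eqVneq n 0; first by rewrite invr0 !mul0r.
by field.
Qed.

Lemma trnorm_repr d (X : 'M[C]_d) : exists Z R : 'M[C]_d,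
  [/\ trnorm X = \tr (X *m Z), 0 <= trnorm X &
      adjmx Z *m Z + adjmx R *m R = 1%:M].
Proof.
set N := adjmx X *m X.
have NH : adjmx N = N by rewrite /N adjM adjK.
have Nn : N \is normalmx by apply/normalmxP; rewrite -adj_ts NH.
move/orthomx_spectralP: Nn.
set Q := spectralmx N; set s := spectral_diag N => eqN.
have Qu : Q \is unitarymx := spectral_unitarymx N.
have QQa : Q *m adjmx Q = 1%:M by rewrite adj_ts; apply/unitarymxP.
have QaQ : adjmx Q *m Q = 1%:M by apply: mulmx1C.
rewrite invmx_unitary // -adj_ts in eqN.
set Y := X *m adjmx Q.
have YY : adjmx Y *m Y = diag_mx s.
  rewrite /Y adjM adjK !mulmxA -(mulmxA Q) -/N eqN !mulmxA QQa mul1mx.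
  by rewrite -mulmxA QQa mulmx1.
have s_ge0 : forall i, 0 <= s 0 i.
  move=> i; have := congr1 (fun M : 'M[C]_d => M i i) YY; rewrite /= !mxE eqxx mulr1n => <-.
  apply: sumr_ge0 => k _; rewrite !mxE mulrC; exact: mul_conjC_ge0.
pose nn i := sqrtC (s 0 i).
have nn_ge0 : forall i, 0 <= nn i by move=> i; rewrite sqrtC_ge0.
pose v := \row_i (nn i)^-1.
have vc : map_mx Num.conj v = v.
  apply/matrixP => i j; rewrite !mxE; apply: conj_Creal; rewrite realV.
  exact: ger0_real.
have vs : forall i, v 0 i * (v 0 i * s 0 i * v 0 i) = v 0 i.
  by move=> i; rewrite !mxE; apply: scal_aux; rewrite sqrtCK.
pose W := Y *m diag_mx v.
have WW : adjmx W *m W = diag_mx (\row_j (v 0 j * s 0 j * v 0 j)).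
  rewrite /W adjM adj_diag vc mulmxA -(mulmxA _ (adjmx Y)) YY !mulmx_diag.
  by congr diag_mx; apply/matrixP => i j; rewrite !mxE.
have WWW : W *m (adjmx W *m W) = W.
  rewrite WW /W -mulmxA mulmx_diag; congr (_ *m _); congr diag_mx.
  by apply/matrixP => i j; have := vs j; rewrite !mxE.
pose Pi := W *m adjmx W.
have PiH : adjmx Pi = Pi by rewrite /Pi adjM adjK.
have PiPi : Pi *m Pi = Pi by rewrite /Pi mulmxA -(mulmxA W) WWW.
exists (adjmx Q *m adjmx W), (1%:M - Pi); split.
- rewrite mulmxA -/Y /W adjM adj_diag vc mulmxA mxtrace_mulC mulmxA YY.
  rewrite mulmx_diag mxtrace_diag /trnorm; apply: eq_bigr => i _.
  rewrite !mxE -/s -/(nn i) /nn.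
  have [->|nz] := eqVneq (sqrtC (s 0 i)) 0.
    by rewrite invr0 mulr0.
  by rewrite -{2}(sqrtCK (s 0 i)) expr2 mulfK.
- by rewrite /trnorm; apply: sumr_ge0 => i _; rewrite sqrtC_ge0.
- rewrite adjB adj1 PiH adjM !adjK mulmxA -(mulmxA W) QQa mulmx1 -/Pi.
  rewrite mulmxBl mul1mx mulmxBr mulmx1 PiPi.
  by rewrite subrr subr0 addrC subrK.
Qed.

End TR.


Section Obs.
Variable C : numClosedFieldType.

Lemma adj_sum m n (I : finType) (F : I -> 'M[C]_(m,n)) :
  adjmx (\sum_i F i) = \sum_i adjmx (F i).
Proof.
apply/matrixP => i j; rewrite /adjmx !mxE !summxE rmorph_sum.
by apply: eq_bigr => k _; rewrite !mxE.
Qed.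

Lemma obs d (I : finType) (Pm : I -> 'M[C]_d) (c : I -> C) :
  projmeas Pm -> (forall i, (c i)^* = c i) -> (forall i, c i * c i = 1) ->
  [/\ adjmx (\sum_i c i *: Pm i) = \sum_i c i *: Pm i,
      adjmx (\sum_i c i *: Pm i) *m (\sum_i c i *: Pm i) = 1%:M &
      forall j, (\sum_i c i *: Pm i) *m Pm j = c j *: Pm j].
Proof.
move=> [PH PP PS] cc c1.
have OH : adjmx (\sum_i c i *: Pm i) = \sum_i c i *: Pm i.
  by rewrite adj_sum; apply: eq_bigr => i _; rewrite adjZ PH cc.
have OP : forall j, (\sum_i c i *: Pm i) *m Pm j = c j *: Pm j.
  move=> j; rewrite mulmx_suml (bigD1 j) //= big1 ?addr0.
    by rewrite -scalemxAl PP eqxx.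
  by move=> i /negPf ij; rewrite -scalemxAl PP ij scaler0.
split => //.
rewrite OH mulmx_sumr -PS; apply: eq_bigr => i _.
by rewrite -scalemxAr OP scalerA c1 scale1r.
Qed.

Lemma sign_c (m : nat) : ((-1 : C) ^+ m)^* = (-1) ^+ m.
Proof. by rewrite rmorphXn rmorphN1. Qed.

Lemma sign_1 (m : nat) : (-1 : C) ^+ m * (-1) ^+ m = 1.
Proof. by rewrite -expr2 -exprM mulnC exprM expr2 mulN1r opprK expr1n. Qed.

End Obs.


Section Win.
Variable C : numClosedFieldType.
Variables (n d : nat) (SK Ct Al : finType).
Variables (pGen : SK -> C) (pEnc : SK -> bool -> Ct -> C)
    (Dec : SK -> Al -> {ffun 'I_n -> bool})
    (D : {ffun 'I_n -> option bool} -> C)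
    (psi : 'M[C]_d) (A : Ct -> Al -> 'M[C]_d)
    (P : bool -> {ffun 'I_n -> bool} -> 'M[C]_d)
    (M : {ffun 'I_n -> option bool} -> {ffun 'I_n -> bool} -> 'M[C]_d).
Hypotheses (hG : distr pGen) (hE : forall sk W, distr (pEnc sk W)) (hD : distr D).
Hypotheses (psiH : adjmx psi = psi)
  (psiP : forall v : 'cV[C]_d, 0 <= (adjmx v *m psi *m v) 0 0)
  (psiT : \tr psi = 1).
Hypotheses (hA : forall c, projmeas (fun a => adjmx (A c a) *m A c a))
  (hP : forall W, projmeas (P W)) (hM : forall w, projmeas (M w)).

Lemma y_ge0 c a : 0 <= \tr (postst A psi c a).
Proof. exact: ff_ge0. Qed.

Lemma y_sum c : \sum_a \tr (postst A psi c a) = 1.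
Proof.
have [_ _ hS] := hA c.
rewrite -psiT -[psi in RHS]mul1mx -hS mulmx_suml raddf_sum /=.
apply: eq_bigr => a _; rewrite /postst mxtrace_mulC !mulmxA.
by [].
Qed.

Lemma pm_ge0 (I : finType) (Pm : I -> 'M[C]_d) i c a : projmeas Pm ->
  0 <= \tr (Pm i *m postst A psi c a).
Proof.
move=> [PH PP _]; rewrite /postst -proj_ff //; first exact: ff_ge0.
by rewrite PP eqxx.
Qed.

Lemma pm_sum (I : finType) (Pm : I -> 'M[C]_d) c a : projmeas Pm ->
  \sum_i \tr (Pm i *m postst A psi c a) = \tr (postst A psi c a).
Proof.
move=> [_ _ PS]; rewrite -raddf_sum /= -mulmx_suml PS mul1mx //.
Qed.

Lemma pm_le (I : finType) (Pm : I -> 'M[C]_d) i c a : projmeas Pm ->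
  \tr (Pm i *m postst A psi c a) <= \tr (postst A psi c a).
Proof.
move=> hp; rewrite -(pm_sum _ Pm c a hp) (bigD1 i) //= lerDl.
by apply: sumr_ge0 => j _; apply: pm_ge0.
Qed.

Definition Gs (W : bool) sk :=
  \sum_c pEnc sk W c * \sum_a \tr (P W (Dec sk a) *m postst A psi c a).

Lemma two_ne0 : (2 : C) != 0. Proof. by rewrite pnatr_eq0. Qed.
Lemma four_ne0 : (4 : C) != 0. Proof. by rewrite pnatr_eq0. Qed.
Lemma half_ge0 : 0 <= (2 : C)^-1. Proof. by rewrite invr_ge0 ler0n. Qed.

Lemma inner_le W sk c a :
  2^-1 * \tr (P W (Dec sk a) *m postst A psi c a)
     + 2^-1 * \sum_(w : {ffun 'I_n -> option bool}) D w *
         \sum_(v : {ffun 'I_n -> bool}) (if [forall i, (w i == Some W) ==> (Dec sk a i == v i)]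
                 then \tr (M w v *m postst A psi c a) else 0)
  <= 2^-1 * \tr (P W (Dec sk a) *m postst A psi c a) + 2^-1 * \tr (postst A psi c a).
Proof.
rewrite lerD2l; apply: ler_wpM2l; first exact: half_ge0.
have [hD0 hD1] := hD.
apply: (@le_trans _ _ (\sum_w D w * \tr (postst A psi c a))).
  apply: ler_sum => w _; apply: ler_wpM2l => //.
  rewrite -(pm_sum _ (M w) c a (hM w)); apply: ler_sum => v _.
  by case: ifP => _ //; apply: pm_ge0.
by rewrite -mulr_suml hD1 mul1r.
Qed.

Lemma S_le W sk :
  \sum_c pEnc sk W c * \sum_a
    (2^-1 * \tr (P W (Dec sk a) *m postst A psi c a)
     + 2^-1 * \sum_(w : {ffun 'I_n -> option bool}) D w *
         \sum_(v : {ffun 'I_n -> bool}) (if [forall i, (w i == Some W) ==> (Dec sk a i == v i)]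
                 then \tr (M w v *m postst A psi c a) else 0))
  <= 2^-1 * Gs W sk + 2^-1.
Proof.
have [hE0 hE1] := hE sk W.
apply: (@le_trans _ _ (\sum_c pEnc sk W c * (2^-1 * \sum_a \tr (P W (Dec sk a) *m postst A psi c a) + 2^-1))).
  apply: ler_sum => c _; apply: ler_wpM2l => //.
  have eS : \sum_a (2^-1 * \tr (P W (Dec sk a) *m postst A psi c a) + 2^-1 * \tr (postst A psi c a))
     = 2^-1 * \sum_a \tr (P W (Dec sk a) *m postst A psi c a) + 2^-1.
    by rewrite big_split /= -!mulr_sumr y_sum mulr1.
  rewrite -eS; apply: ler_sum => a _; exact: inner_le.
rewrite /Gs big_distrr /= -[X in _ <= _ + X]mulr1 -hE1 big_distrr /= -big_split /=.
by apply: ler_sum => c _; rewrite le_eqVlt; apply/orP; left; apply/eqP; ring.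
Qed.

Lemma Gs_le1 W sk : Gs W sk <= 1.
Proof.
have [hE0 hE1] := hE sk W.
rewrite /Gs -hE1; apply: ler_sum => c _; rewrite -[X in _ <= X]mulr1.
apply: ler_wpM2l => //; rewrite -(y_sum c); apply: ler_sum => a _.
exact: pm_le.
Qed.

Lemma Gs_ge0 W sk : 0 <= Gs W sk.
Proof.
have [hE0 hE1] := hE sk W.
apply: sumr_ge0 => c _; apply: mulr_ge0 => //; apply: sumr_ge0 => a _.
exact: pm_ge0.
Qed.

Lemma win_bound W :
  winprob pGen pEnc Dec D A psi P M <= 4^-1 * (\sum_sk pGen sk * Gs W sk) + 3 * 4^-1.
Proof.
have [hG0 hG1] := hG.
rewrite /winprob.
apply: (@le_trans _ _ (\sum_sk pGen sk * (4^-1 * Gs W sk + 3 * 4^-1))).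
  apply: ler_sum => sk _; apply: ler_wpM2l => //.
  rewrite big_bool /=.
  have h1 := S_le W sk.
  have h2 := le_trans (S_le (~~ W) sk) (lerD (ler_wpM2l half_ge0 (Gs_le1 (~~ W) sk)) (lexx _)).
  have e : 4^-1 * Gs W sk + 3 * 4^-1 = 2^-1 * (2^-1 * Gs W sk + 2^-1) + 2^-1 * (2^-1 * 1 + 2^-1 :> C).
    by field.
  rewrite e.
  case: W h1 h2 {e} => /= h1 h2.
    by rewrite lerD // ler_wpM2l // half_ge0.
  by rewrite addrC lerD // ler_wpM2l // half_ge0.
rewrite -[X in _ <= _ + X]mul1r -hG1 mulr_sumr mulr_suml -big_split /=.
by apply: ler_sum => sk _; rewrite mulrDr mulrCA mulrC.
Qed.

End Win.

Section Tri.
Variable C : numClosedFieldType.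
Variables (SK Ct Al : finType) (p : SK -> C) (q : SK -> Ct -> C).

Definition tri (h : SK -> Ct -> Al -> C) :=
  \sum_sk p sk * \sum_c q sk c * \sum_a h sk c a.

Lemma tri_add h1 h2 : tri h1 + tri h2 = tri (fun sk c a => h1 sk c a + h2 sk c a).
Proof.
rewrite /tri -big_split; apply: eq_bigr => sk _ /=.
rewrite -mulrDr -big_split; congr (_ * _); apply: eq_bigr => c _ /=.
by rewrite -mulrDr -big_split.
Qed.

Lemma tri_scale x h : x * tri h = tri (fun sk c a => x * h sk c a).
Proof.
rewrite /tri big_distrr; apply: eq_bigr => sk _ /=.
rewrite mulrCA big_distrr; congr (_ * _); apply: eq_bigr => c _ /=.
by rewrite mulrCA big_distrr.
Qed.

Lemma tri_eq h1 h2 : (forall sk c a, h1 sk c a = h2 sk c a) -> tri h1 = tri h2.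
Proof.
move=> e; rewrite /tri; apply: eq_bigr => sk _; congr (_ * _).
apply: eq_bigr => c _; congr (_ * _); apply: eq_bigr => a _; exact: e.
Qed.

Lemma tri_le h1 h2 : (forall sk, 0 <= p sk) -> (forall sk c, 0 <= q sk c) ->
  (forall sk c a, h1 sk c a <= h2 sk c a) -> tri h1 <= tri h2.
Proof.
move=> p0 q0 e; rewrite /tri; apply: ler_sum => sk _; apply: ler_wpM2l => //.
apply: ler_sum => c _; apply: ler_wpM2l => //.
apply: ler_sum => a _; exact: e.
Qed.

Lemma tri_conj h : (forall sk, 0 <= p sk) -> (forall sk c, 0 <= q sk c) ->
  (tri h)^* = tri (fun sk c a => (h sk c a)^*).
Proof.
move=> p0 q0; rewrite /tri rmorph_sum; apply: eq_bigr => sk _ /=.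
rewrite rmorphM /= geC0_conj // rmorph_sum; congr (_ * _); apply: eq_bigr => c _ /=.
by rewrite rmorphM /= geC0_conj // rmorph_sum.
Qed.

End Tri.


Section G.
Variable C : numClosedFieldType.
Variable d : nat.
Variables O Z : 'M[C]_d.
Definition gg (M : 'M[C]_d) := \tr ((O *m M *m O - M) *m Z).
Lemma gg_sum (I : finType) (F : I -> 'M[C]_d) : gg (\sum_i F i) = \sum_i gg (F i).
Proof.
rewrite /gg mulmx_sumr mulmx_suml -sumrB mulmx_suml raddf_sum.
by apply: eq_bigr.
Qed.
Lemma gg_Z a M : gg (a *: M) = a * gg M.
Proof. by rewrite /gg -scalemxAr -scalemxAl -scalerBr -scalemxAl mxtraceZ. Qed.
End G.

Lemma final_arith (C : numClosedFieldType) (tn eps delta : C) :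
  0 <= tn -> 0 <= delta -> delta <= 1 -> delta <= 4 * eps ->
  (forall mu, 0 < mu -> tn + tn <= 4 * mu * (1 - delta) + 4 * (mu^-1 + 1) * delta) ->
  tn <= 14%:R * sqrtC eps.
Proof.
move=> tn0 dl0 dl1 dle H.
have eps0 : 0 <= eps.
  have := le_trans dl0 dle; rewrite pmulr_rge0 //; exact: ltr0n.
set r := sqrtC eps.
have r0 : 0 <= r by rewrite sqrtC_ge0.
have rr : r * r = eps by rewrite -expr2 sqrtCK.
have [r_eq0 | r_ne0] := eqVneq r 0.
  rewrite r_eq0 mulr0.
  have e0 : eps = 0 by rewrite -rr r_eq0 mulr0.
  have dl_0 : delta = 0 by apply/le_anti; rewrite dl0 andbT -(mulr0 4) -e0.
  have [->|tnz] := eqVneq tn 0; first by [].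
  have tpos : 0 < tn by rewrite lt_def tnz tn0.
  have q0 : 0 < tn / 4 by apply: divr_gt0 => //; exact: ltr0n.
  have := H _ q0; rewrite dl_0 subr0 !mulr0 addr0 mulr1.
  have -> : 4 * (tn / 4) = tn by field.
  rewrite -subr_ge0 opprD addrA subrr add0r oppr_ge0 => h.
  by have := lt_le_trans tpos h; rewrite ltxx.
have rpos : 0 < r by rewrite lt_def r_ne0 r0.
have dl2r : delta <= 2 * r.
  rewrite -(@ler_sqr _ delta (2 * r)) ?nnegrE //; last first.
    by rewrite mulr_ge0 // ler0n.
  apply: le_trans (_ : delta <= _).
    by rewrite expr2 -[X in _ <= X]mulr1; apply: ler_wpM2l.
  rewrite expr2 mulrACA rr -natrM; exact: dle.
have := H r rpos => h.
have h2 : tn + tn <= 28%:R * r.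
  apply: le_trans h _; rewrite -subr_ge0.
  have -> : 28%:R * r - (4 * r * (1 - delta) + 4 * (r^-1 + 1) * delta)
     = 4 * r * delta + 4 * r^-1 * (4 * (r * r) - delta) + 4 * (2 * r - delta).
    by field.
  rewrite rr; apply: addr_ge0; first apply: addr_ge0.
  - by apply: mulr_ge0 => //; apply: mulr_ge0 => //; exact: ler0n.
  - apply: mulr_ge0; last by rewrite subr_ge0.
    by apply: mulr_ge0; [exact: ler0n | rewrite invr_ge0].
  - by apply: mulr_ge0; [exact: ler0n | rewrite subr_ge0].
rewrite -subr_ge0.
have -> : 14%:R * r - tn = 2^-1 * (28%:R * r - (tn + tn)) by field.
by apply: mulr_ge0; [rewrite invr_ge0 ler0n | rewrite subr_ge0].
Qed.

Theorem mainTheorem8 :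
  exists K : nat,
  forall (C : numClosedFieldType) (n d : nat) (SK Ct Al : finType)
    (pGen : SK -> C) (pEnc : SK -> bool -> Ct -> C)
    (Dec : SK -> Al -> {ffun 'I_n -> bool})
    (D : {ffun 'I_n -> option bool} -> C)
    (psi : 'M[C]_d) (A : Ct -> Al -> 'M[C]_d)
    (P : bool -> {ffun 'I_n -> bool} -> 'M[C]_d)
    (M : {ffun 'I_n -> option bool} -> {ffun 'I_n -> bool} -> 'M[C]_d)
    (eps : C),
    distr pGen ->
    (forall sk W, distr (pEnc sk W)) ->
    distr D ->
    density psi ->
    (forall c, projmeas (fun a => adjmx (A c a) *m A c a)) ->
    (forall W, projmeas (P W)) ->
    (forall w, projmeas (M w)) ->
    (forall (w : {ffun 'I_n -> option bool}) (u : {ffun 'I_n -> bool}), (exists i, w i = None /\ u i = true) -> M w u = 0) ->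
    winprob pGen pEnc Dec D A psi P M = 1 - eps ->
    forall (b : {ffun 'I_n -> bool}) (W : bool),
      trnorm (Wobs P W b *m psiEnc pGen pEnc A psi W *m Wobs P W b
              - psiEnc pGen pEnc A psi W)
      <= K%:R * sqrtC eps.
Proof.
exists 14%N.
move=> C n d SK Ct Al pGen pEnc Dec D psi A P M eps hG hE hD [psiH psiP psiT]
  hA hP hM _ hwin b W.
pose cs := fun u : {ffun 'I_n -> bool} => (-1 : C) ^+ (\sum_i (u i && b i))%N.
set O := Wobs P W b.
have [OH OO OP] : [/\ adjmx O = O, adjmx O *m O = 1%:M &
    forall u, O *m P W u = cs u *: P W u].
  exact: (obs _ _ _ (P W) cs (hP W) (fun u => sign_c _ _) (fun u => sign_1 _ _)).
set rho := psiEnc pGen pEnc A psi W.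
have [Z [R [eT tn0 HZ]]] := trnorm_repr _ _ (O *m rho *m O - rho).
set tn := trnorm _ in eT tn0 *.
pose Gt := \sum_sk pGen sk * Gs _ _ _ _ _ _ pEnc Dec psi A P W sk.
have [hG0 hG1] := hG.
have hE0 : forall sk c, 0 <= pEnc sk W c by move=> sk c; case: (hE sk W).
have Gt_le1 : Gt <= 1.
  rewrite -hG1; apply: ler_sum => sk _; rewrite -[X in _ <= X]mulr1.
  by apply: ler_wpM2l => //; apply: Gs_le1.
have Gt_ge0 : 0 <= Gt.
  by apply: sumr_ge0 => sk _; apply: mulr_ge0 => //; apply: Gs_ge0.
have hwb := win_bound _ _ _ _ _ _ pGen pEnc Dec D psi A P M hG hE hD psiP psiT hA hP hM W.
rewrite hwin -/Gt in hwb.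
apply: (@final_arith _ tn eps (1 - Gt) tn0).
- by rewrite subr_ge0.
- by rewrite lerBlDr lerDl.
- rewrite -subr_ge0.
  have -> : 4 * eps - (1 - Gt) = 4 * ((4^-1 * Gt + 3 / 4) - (1 - eps)).
    by field.
  by apply: mulr_ge0; rewrite ?ler0n // subr_ge0.
move=> mu mu0.
have tnc : tn^* = tn by rewrite geC0_conj.
have egg : tn = tri _ _ _ _ pGen (fun sk c => pEnc sk W c)
                  (fun sk c a => gg _ _ O Z (postst A psi c a)).
  rewrite eT -/(gg _ _ O Z rho) /rho /psiEnc gg_sum /tri; apply: eq_bigr => sk _.
  rewrite gg_Z gg_sum; congr (_ * _); apply: eq_bigr => c _.
  by rewrite gg_Z gg_sum.
have [PH PP PS] := hP W.
pose X := fun (sk : SK) (c : Ct) a => \tr (P W (Dec sk a) *m postst A psi c a).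
pose Y := fun (sk : SK) (c : Ct) a => \tr (postst A psi c a).
pose al := 4 * mu - 4 * (mu^-1 + 1).
pose be := 4 * (mu^-1 + 1).
have step : tn + tn^* <= tri _ _ _ _ pGen (fun sk c => pEnc sk W c)
     (fun sk c a => al * X sk c a + be * Y sk c a).
  rewrite egg tri_conj // tri_add; apply: tri_le => // sk c a.
  have PiPi : P W (Dec sk a) *m P W (Dec sk a) = P W (Dec sk a) by rewrite PP eqxx.
  apply: le_trans (perk _ _ _ psiH psiP O (P W (Dec sk a)) Z R (A c a) (cs (Dec sk a)) mu OH OO (PH _) PiPi (OP _) (sign_c _ _) (sign_1 _ _) HZ mu0) _.
  rewrite le_eqVlt; apply/orP; left; apply/eqP; rewrite /X /Y /al /be /postst; ring.
have trY : tri _ _ _ _ pGen (fun sk c => pEnc sk W c) Y = 1.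
  rewrite -hG1 /tri; apply: eq_bigr => sk _; rewrite -[RHS]mulr1; congr (_ * _).
  rewrite -(proj2 (hE sk W)); apply: eq_bigr => c _.
  by rewrite /Y y_sum // mulr1.
have trX : tri _ _ _ _ pGen (fun sk c => pEnc sk W c) X = Gt by [].
have e1 : tri _ _ _ _ pGen (fun sk c => pEnc sk W c)
     (fun sk c a => al * X sk c a + be * Y sk c a) = al * Gt + be * 1.
  by rewrite -trX -trY !tri_scale tri_add.
rewrite -{2}tnc; apply: le_trans step _; rewrite e1 /al /be.
rewrite le_eqVlt; apply/orP; left; apply/eqP; ring.
Qed.
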